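(* Let $G$ be a graph, $\alpha,k$ positive integers, and $S\subseteq V(G)$ with $|S|\ge\alpha+1$ and $|\delta_G(S,V(G)\setminus S)|\le 2\alpha^2+4k$. For $v\in S$ let $\gamma_S(v)=|\delta_G(\{v\},V(G)\setminus S)|$, and for $X\subseteq S$ let $\gamma_S(X)=\sum_{v\in X}\gamma_S(v)$. If $\mathrm{ecrw}_\alpha(G)\le k$, then there is a tree-cut decomposition $\mathcal{T}=(T,\{X_t\}_{t\in V(T)})$ of $G[S]$ such that: (a) $T$ is a star with center $t_c$ and at least one leaf; (b) $|X_{t_c}|\le\alpha$ and $\mathrm{cross}_{\mathcal T}(t_c)\le k$; (c) for each leaf $t$ of $T$, $\gamma_S(X_t)\le\alpha^2+2k$ and $|\delta_{G[S]}(X_t,X_{t_c})|\le\alpha^2+k$; (d) there is no leaf $q$ of $T$ with $X_q=S$. (That is, $(G[S],\alpha,k,\gamma_S)$ is a Yes-instance of \textsc{Constrained Star-Cut Decomposition}.)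
   Context: For disjoint vertex sets $S_1,S_2$ of a graph $G$, $\delta_G(S_1,S_2)$ denotes the set of edges with one endpoint in $S_1$ and the other in $S_2$. A tree-cut decomposition of a graph $G$ is a pair $\mathcal{T}=(T,\{X_t\}_{t\in V(T)})$ where $T$ is a tree and the bags $X_t\subseteq V(G)$ are pairwise disjoint (possibly empty) with $\bigcup_{t\in V(T)}X_t=V(G)$. For a node $t$ of $T$, let $T_1,\dots,T_m$ be the connected components of $T-t$ and $Z_i=\bigcup_{s\in V(T_i)}X_s$; $\mathrm{cross}_{\mathcal{T}}(t)$ is the number of edges of $G$ whose two endpoints lie in two distinct sets among $Z_1,\dots,Z_m$ (if $T$ has one node, $\mathrm{cross}_{\mathcal T}(t)=0$). The crossing number of $\mathcal{T}$ is $\max_{t}\mathrm{cross}_{\mathcal{T}}(t)$, and the thickness of $\mathcal{T}$ is $\max_t|X_t|$. $\mathrm{ecrw}_\alpha(G)$ is the minimum crossing number over tree-cut decompositions of $G$ of thickness at most $\alpha$. *)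

(* Defs.v *)
(* Finite simple graphs as symmetric irreflexive relations. *)
From mathcomp Require Import all_boot.
Set Implicit Arguments. Unset Strict Implicit. Unset Printing Implicit Defensive.

Definition edges (V : finType) (e : rel V) : {set {set V}} :=
  [set f : {set V} | [exists u, exists v, (f == [set u; v]) && e u v]].

Definition delta (V : finType) (e : rel V) (S1 S2 : {set V}) : nat :=
  #|[set f : {set V} | [exists u, exists v,
       [&& f == [set u; v], e u v, u \in S1 & v \in S2]]]|.

Definition is_tree (n : nat) (tr : rel 'I_n) : Prop :=
  [/\ 0 < n, symmetric tr, irreflexive tr,
      (forall a b, connect tr a b) & #|edges tr| = n.-1].

Definition is_tcd (V : finType) (e : rel V) (n : nat) (tr : rel 'I_n)
    (X : 'I_n -> {set V}) : Prop :=
  [/\ is_tree tr,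
      (forall s s', s != s' -> [disjoint X s & X s']) &
      (forall v, exists s, v \in X s)].

Definition tree_minus (n : nat) (tr : rel 'I_n) (t : 'I_n) : rel 'I_n :=
  [rel a b | [&& tr a b, a != t & b != t]].

Definition cross (V : finType) (e : rel V) (n : nat) (tr : rel 'I_n)
    (X : 'I_n -> {set V}) (t : 'I_n) : nat :=
  #|[set f : {set V} | [exists u, exists v, exists s, exists s',
       [&& f == [set u; v], e u v, u \in X s, v \in X s', s != t, s' != t &
           ~~ connect (tree_minus tr t) s s']]]|.

Definition ecrw_le (V : finType) (e : rel V) (alpha k : nat) : Prop :=
  exists n (tr : rel 'I_n) (X : 'I_n -> {set V}),
    [/\ is_tcd e tr X, (forall t, #|X t| <= alpha) & (forall t, cross e tr X t <= k)].

Definition induced (V : finType) (e : rel V) (S : {set V}) : rel {x : V | x \in S} :=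
  fun x y => e (val x) (val y).

Definition gammaS (V : finType) (e : rel V) (S : {set V}) (Y : {set {x : V | x \in S}}) : nat :=
  \sum_(v in Y) delta e [set val v] (~: S).

Definition is_star (n : nat) (tr : rel 'I_n) (tc : 'I_n) : Prop :=
  (forall a b, tr a b = ((a == tc) && (b != tc)) || ((b == tc) && (a != tc)))
  /\ exists t, t != tc.

Arguments induced {V} e S _ _.
Arguments gammaS {V} e S Y.

(* Main.v *)
Require Import Defs.
From mathcomp Require Import all_boot zify.
Set Implicit Arguments. Unset Strict Implicit. Unset Printing Implicit Defensive.

Definition Rk (T : finType) (r : rel T) (t0 : T) (k : nat) : {set T} :=
  iter k (fun A => A :|: [set y | [exists x in A, r x y]]) [set t0].

Lemma Rk_mono (T : finType) (r : rel T) t0 i j : i <= j -> Rk r t0 i \subset Rk r t0 j.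
Proof.
move=> /subnK <-; elim: (j - i) => [|m IH] //=.
rewrite /Rk /=.
rewrite -/(Rk r t0 i). by apply: (subset_trans IH); apply: subsetUl.
Qed.

Lemma Rk_path (T : finType) (r : rel T) t0 x p k :
  path r x p -> x \in Rk r t0 k -> last x p \in Rk r t0 (k + size p).
Proof.
elim: p x k => [|y p IH] x k /=; first by rewrite addn0.
move=> /andP[rxy hp] hx; rewrite addnS -addSn; apply: IH => //.
rewrite /Rk /= -/(Rk r t0 k) in_setU; apply/orP; right.
by rewrite inE; apply/existsP; exists x; rewrite hx.
Qed.

Lemma edges_lb (T : finType) (r : rel T) (t0 : T) :
  (forall a b, connect r a b) -> #|T|.-1 <= #|edges r|.
Proof.
move=> Hc.
have exk : forall v, exists k, v \in Rk r t0 k.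
  move=> v; have /connectP[p hp ->] := Hc t0 v.
  exists (0 + size p); apply: Rk_path => //; by rewrite /Rk /= set11.
pose d v := ex_minn (exk v).
have dP : forall v, v \in Rk r t0 (d v).
  by move=> v; rewrite /d; case: ex_minnP.
have dmin : forall v k, v \in Rk r t0 k -> d v <= k.
  by move=> v k hk; rewrite /d; case: ex_minnP => m _ /(_ k hk).
have parE : forall v, v != t0 -> exists p, r p v && (d p < d v).
  move=> v hv; move: (dP v) (dmin v); case E: (d v) => [|m] hv1 hmin.
    by move: hv1; rewrite /Rk /= inE (negbTE hv).
  move: hv1; rewrite /Rk /= -/(Rk r t0 m) in_setU => /orP[hm|].
    by have := hmin m hm; rewrite ltnn.
  rewrite inE => /existsP[p /andP[hp rpv]]; exists p; rewrite rpv /=.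
  by have := dmin p m hp; lia.
pose par v := if [pick p | r p v && (d p < d v)] is Some p then p else v.
have parP : forall v, v != t0 -> r (par v) v && (d (par v) < d v).
  move=> v hv; rewrite /par; case: pickP => [p //|H].
  by have [p] := parE v hv; rewrite H.
pose g v := [set v; par v].
have inj : {in [set~ t0] &, injective g}.
  move=> v w; rewrite !inE => hv hw /setP E.
  have := E v; rewrite !inE eqxx /= => /esym /orP[/eqP//|/eqP vpw].
  have := E w; rewrite !inE eqxx /= => /orP[/eqP//|/eqP wpv].
  have := parP v hv; have := parP w hw; rewrite -vpw -wpv => /andP[_ h1] /andP[_ h2].
  by have := ltn_trans h1 h2; rewrite ltnn.
rewrite -(cardsC1 t0) -(card_in_imset inj); apply: subset_leq_card.
apply/subsetP => f /imsetP[v hv ->]; rewrite inE; apply/existsP; exists (par v).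
apply/existsP; exists v; rewrite !inE in hv; have /andP[-> _] := parP v hv.
by rewrite andbT /g setUC.
Qed.

Lemma tm_sym n (tr : rel 'I_n) t : symmetric tr -> symmetric (tree_minus tr t).
Proof. by move=> sym a b; rewrite /tree_minus /= sym; case: (a != t); case: (b != t); rewrite ?andbF ?andbT. Qed.

Lemma bridge n (tr : rel 'I_n) t s z : is_tree tr -> tr t s ->
  connect (tree_minus tr t) s z -> connect (tree_minus tr s) z t -> False.
Proof.
case=> n0 sym irr conn ecount trts c1 c2.
have ts : t != s by apply/eqP=> E; move: trts; rewrite E irr.
pose r' := [rel a b | tr a b && ([set a; b] != [set t; s])].
have r'sym : symmetric r' by move=> a b; rewrite /= sym setUC.
have sub0 : forall u, subrel (tree_minus tr u) tr by move=> u a b /andP[].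
have sub1 : forall u, (u == t) || (u == s) -> subrel (tree_minus tr u) r'.
  move=> u hu a b /andP[hab /andP[ha hb]]; rewrite /= hab /=; apply/eqP => E.
  have : u \in [set t; s] by rewrite !inE.
  by rewrite -E !inE => /orP[/eqP E'|/eqP E']; [move: ha|move: hb]; rewrite E' eqxx.
have cst : connect r' s t.
  apply: (connect_trans (y := z)).
    by apply: (connect_sub _ c1) => a b h; apply: connect1; apply: (sub1 t) => //; rewrite eqxx.
  by apply: (connect_sub _ c2) => a b h; apply: connect1; apply: (sub1 s) => //; rewrite eqxx orbT.
have cts : connect r' t s by rewrite (sym_connect_sym r'sym).
have allc : forall a b, connect r' a b.
  move=> a b; apply: (connect_sub _ (conn a b)) => x y rxy.
  case E: ([set x; y] == [set t; s]); last by apply: connect1; rewrite /= rxy E.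
  have xy : x != y by apply/eqP=> Exy; move: rxy; rewrite Exy irr.
  move/eqP/setP: E => E.
  have := E x; have := E y; rewrite !inE !eqxx orbT /=.
  move=> /esym/orP[/eqP yt|/eqP ys] /esym/orP[/eqP xt|/eqP xs].
  - by move: xy; rewrite xt yt eqxx.
  - by rewrite xs yt.
  - by rewrite xt ys.
  - by move: xy; rewrite xs ys eqxx.
have := edges_lb t allc; rewrite card_ord.
have sube : edges r' \subset edges tr :\ [set t; s].
  apply/subsetP => f; rewrite !inE => /existsP[u /existsP[v /andP[/eqP -> /andP[huv hne]]]].
  rewrite hne /=; apply/existsP; exists u; apply/existsP; exists v; by rewrite eqxx.
have ine : [set t; s] \in edges tr.
  by rewrite inE; apply/existsP; exists t; apply/existsP; exists s; rewrite eqxx.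
have E := cardsD1 [set t; s] (edges tr); rewrite ine ecount in E.
have := subset_leq_card sube.
have ts' : nat_of_ord t <> nat_of_ord s by move=> h; move/eqP: ts; apply; apply: val_inj.
have E' : n.-1 = #|edges tr :\ [set t; s]|.+1 by rewrite E.
have := ltn_ord t; have := ltn_ord s; lia.
Qed.

Lemma path_split n (tr : rel 'I_n) t s x p : t != s -> x != t -> x != s ->
  path tr x p -> (last x p == t) || (last x p == s) ->
  connect (tree_minus tr t) x s || connect (tree_minus tr s) x t.
Proof.
move=> ts; elim: p x => [|y p IH] x hxt hxs /=; first by rewrite (negbTE hxt) (negbTE hxs).
move=> /andP[hxy hp] hl.
case: (eqVneq y s) => [ys|hys].
  by apply/orP; left; apply: connect1; rewrite /tree_minus /= -ys hxy hxt ys eq_sym ts.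
case: (eqVneq y t) => [yt|hyt].
  by apply/orP; right; apply: connect1; rewrite /tree_minus /= -yt hxy hxs yt ts.
have /orP[h|h] := IH y hyt hys hp hl; apply/orP; [left|right];
  apply: (connect_trans _ h); apply: connect1; by rewrite /tree_minus /= hxy ?hxt ?hxs ?hyt ?hys.
Qed.

Lemma keyB n (tr : rel 'I_n) t s x : (forall a b, connect tr a b) -> t != s ->
  x != t -> x != s -> ~~ connect (tree_minus tr t) x s -> connect (tree_minus tr s) x t.
Proof.
move=> conn ts hxt hxs hn; have /connectP[p hp hl] := conn x t.
have := path_split ts hxt hxs hp; rewrite -hl eqxx => /(_ isT) /orP[h|//].
by rewrite h in hn.
Qed.

Lemma neighbor n (tr : rel 'I_n) t x : (forall a b, connect tr a b) -> x != t ->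
  exists c, tr c t && connect (tree_minus tr t) x c.
Proof.
move=> conn hx; have /connectP[p hp hl] := conn x t.
elim: p x hx hp hl => [|y p IH] x hx /=; first by move=> _ E; rewrite E eqxx in hx.
move=> /andP[hxy hp] hl.
case: (eqVneq y t) => [yt|hyt]; first by exists x; rewrite -yt hxy connect0.
have [c /andP[hc cc]] := IH y hyt hp hl; exists c; rewrite hc /=.
apply: (connect_trans _ cc); apply: connect1; by rewrite /tree_minus /= hxy hx hyt.
Qed.

Definition cw n (tr : rel 'I_n) (w : 'I_n -> nat) (t x : 'I_n) : nat :=
  \sum_(y : 'I_n) (if (y != t) && connect (tree_minus tr t) x y then w y else 0).

Lemma cw_eq n (tr : rel 'I_n) w t x x' : symmetric tr ->
  connect (tree_minus tr t) x x' -> cw tr w t x = cw tr w t x'.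
Proof.
move=> sym c; rewrite /cw; apply: eq_bigr => y _.
have cs := sym_connect_sym (tm_sym t sym).
case: (boolP (connect (tree_minus tr t) x' y)) => h.
  by rewrite (connect_trans c h).
case: (boolP (connect (tree_minus tr t) x y)) => h'; last by rewrite andbF.
by rewrite cs in c; rewrite (connect_trans c h') in h.
Qed.

Lemma leq_sum_pw (I : finType) (F G : I -> nat) :
  (forall i, F i <= G i) -> \sum_i F i <= \sum_i G i.
Proof. by move=> h; apply: leq_sum => i _. Qed.

Lemma centroid n (tr : rel 'I_n) (w : 'I_n -> nat) : is_tree tr ->
  exists t : 'I_n, forall x, x != t -> 2 * cw tr w t x <= \sum_y w y.
Proof.
move=> Htr; have [n0 sym irr conn ecount] := Htr.
set W := \sum_y w y.
pose heavy (t : 'I_n) := [set x | (x != t) && (W < 2 * cw tr w t x)].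
pose t0 : 'I_n := Ordinal n0.
pose t := [arg min_(u < t0) #|heavy u|].
exists t => x hx; rewrite leqNgt; apply/negP => hxw.
have [c /andP[hct cxc]] := neighbor conn hx.
have tc : t != c by apply/eqP => E; move: hct; rewrite E irr.
have hcw : cw tr w t x = cw tr w t c by apply: cw_eq.
have sub : heavy c \proper heavy t.
  apply/properP; split; last first.
    exists c; last by rewrite inE eqxx.
    by rewrite inE eq_sym tc /= -hcw.
  apply/subsetP => y; rewrite !inE => /andP[hyc hy].
  have nyt : ~~ connect (tree_minus tr c) y t.
    apply/negP => cyt.
    have E : cw tr w c y = cw tr w c t by apply: cw_eq.
    have : cw tr w c t + cw tr w t c <= W.
      rewrite -big_split /=; apply: leq_sum_pw => z.
      case: ifP => [/andP[hzc czt]|_]; case: ifP => [/andP[hzt ctz]|_]; rewrite ?addn0 //.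
      have htc : tr t c by rewrite sym.
      exfalso; apply: (bridge Htr htc ctz).
      by rewrite (sym_connect_sym (tm_sym c sym)).
    rewrite -hcw; lia.
  have yt : y != t by apply/eqP => E; rewrite E connect0 in nyt.
  have cyc : connect (tree_minus tr t) y c.
    apply/negPn/negP => h; have := keyB conn tc yt hyc h; by rewrite (negbTE nyt).
  rewrite yt /=; apply: (leq_trans hy); rewrite leq_mul2l /=.
  apply: leq_sum_pw => z.
  case: ifP => [/andP[hzc cyz]|]; last by move=> _; apply: leq0n.
  have zt : z != t by apply/eqP => E; rewrite -E cyz in nyt.
  have nzt : ~~ connect (tree_minus tr c) z t.
    by apply/negP => h; rewrite (connect_trans cyz h) in nyt.
  have czc : connect (tree_minus tr t) z c.
    apply/negPn/negP => h; have := keyB conn tc zt hzc h; by rewrite (negbTE nzt).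
  have cs := sym_connect_sym (tm_sym t sym).
  by rewrite zt (connect_trans cyc _) // cs.
have := proper_card sub; rewrite /t; case: arg_minnP => // u _ hu.
by move=> h; have := hu c isT; lia.
Qed.

Lemma imset_pair (aT rT : finType) (h : aT -> rT) (u v : aT) :
  h @: [set u; v] = [set h u; h v].
Proof. by rewrite imsetU1 imset_set1. Qed.

Lemma sum_delta (V : finType) (e : rel V) (S : {set V}) :
  \sum_(x : {x : V | x \in S}) delta e [set val x] (~: S) <= delta e S (~: S).
Proof.
pose E (A : {set V}) := [set f : {set V} | [exists u, exists v,
       [&& f == [set u; v], e u v, u \in A & v \in ~: S]]].
rewrite /delta -/(E S).
have cE : forall A, #|E A| = \sum_f (if f \in E A then 1 else 0).
  by move=> A; rewrite -sum1_card big_mkcond.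
under eq_bigr => x _ do rewrite -/(E [set val x]) cE.
rewrite exchange_big cE; apply: leq_sum => f _.
case: (pickP (fun x : {x : V | x \in S} => f \in E [set val x])) => [x0 hx0|H]; last first.
  by rewrite big1 // => x _; rewrite H.
have uniq : forall x, f \in E [set val x] -> x = x0.
  move=> x; move: hx0; rewrite !inE => /existsP[u0 /existsP[v0 /and4P[/eqP E0 _ hu0 hv0]]].
  move=> /existsP[u /existsP[v /and4P[/eqP E1 _ hu hv]]].
  move: hu hu0; rewrite !inE => /eqP hu /eqP hu0.
  apply: val_inj; have : val x \in [set val x0; v0] by rewrite -hu0 -E0 E1 hu !inE eqxx.
  rewrite !inE => /orP[/eqP //|/eqP E2].
  by move: hv0; rewrite inE -E2 (valP x).
rewrite (bigD1 x0) //= hx0 big1; last first.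
  move=> x hx; case: ifP => // /uniq E1; by rewrite E1 eqxx in hx.
have -> : f \in E S.
  move: hx0; rewrite !inE => /existsP[u /existsP[v /and4P[hf huv hu hv]]].
  apply/existsP; exists u; apply/existsP; exists v; rewrite hf huv hv andbT /=.
  by move: hu; rewrite inE => /eqP ->; apply: (valP x0).
by [].
Qed.

Definition star n (t : 'I_n) : rel 'I_n :=
  fun a b => ((a == t) && (b != t)) || ((b == t) && (a != t)).

Lemma star_tree n (t : 'I_n) : is_tree (star t).
Proof.
split.
- exact: leq_ltn_trans (leq0n t) (ltn_ord t).
- by move=> a b; rewrite /star orbC.
- by move=> a; rewrite /star; case: (a == t).
- move=> a b; case: (eqVneq a b) => [->|ab]; first exact: connect0.
  case: (eqVneq a t) => [hat|ant].
    by apply: connect1; rewrite /star hat eqxx -hat eq_sym ab.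
  case: (eqVneq b t) => [bt|bnt].
    by apply: connect1; rewrite /star bt eqxx ant orbT.
  apply: (connect_trans (y := t)); apply: connect1; by rewrite /star eqxx ?ant ?bnt ?orbT.
- have -> : edges (star t) = [set [set t; s] | s in [set~ t]].
    apply/setP => f; rewrite inE; apply/idP/idP.
      move=> /existsP[u /existsP[v /andP[/eqP -> /orP[/andP[/eqP ut vt]|/andP[/eqP vt ut]]]]]; apply/imsetP.
        by exists v; rewrite ?ut // !inE.
      by exists u; rewrite ?vt 1?setUC // !inE.
    move=> /imsetP[s hs ->]; apply/existsP; exists t; apply/existsP; exists s; rewrite eqxx /star eqxx /=.
    by move: hs; rewrite !inE => ->.
  rewrite card_in_imset ?cardsC1 ?card_ord //.
  move=> s s'; rewrite !inE => hs hs' /setP E.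
  have := E s; rewrite !inE eqxx orbT (negbTE hs) /=; by move=> /esym/eqP.
Qed.

Lemma star_tm n (t a b : 'I_n) : connect (tree_minus (star t) t) a b -> a = b.
Proof.
move=> /connectP[[|y p] /= hp ->] //.
by move: hp; rewrite /tree_minus /star /=; case: (a == t); case: (y == t).
Qed.

Lemma card_map_le (V : finType) (S : pred V) (A : {set {set {x : V | S x}}}) (B : {set {set V}}) :
  (forall f, f \in A -> val @: f \in B) -> #|A| <= #|B|.
Proof.
move=> h; rewrite -(card_imset _ (imset_inj val_inj)); apply: subset_leq_card.
by apply/subsetP => g /imsetP[f hf ->]; apply: h.
Qed.

Lemma sum_sub (I : finType) (P Q : pred I) (F : I -> nat) :
  (forall i, P i -> Q i) -> \sum_(i | P i) F i <= \sum_(i | Q i) F i.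
Proof.
move=> h; rewrite [X in X <= _]big_mkcond [X in _ <= X]big_mkcond.
by apply: leq_sum => i _; case: ifP => // /h ->.
Qed.

Lemma cw_le n (tr : rel 'I_n) w t x : cw tr w t x <= \sum_y w y.
Proof. by apply: leq_sum_pw => y; case: ifP. Qed.

Theorem lemma4p1 (V : finType) (e : rel V) (Hsym : symmetric e) (Hirr : irreflexive e)
    (alpha k : nat) (Ha : 0 < alpha) (Hk : 0 < k) (S : {set V})
    (HS : alpha.+1 <= #|S|)
    (Hdelta : delta e S (~: S) <= 2 * alpha ^ 2 + 4 * k)
    (Hecrw : ecrw_le e alpha k) :
  exists (n : nat) (tr : rel 'I_n) (X : 'I_n -> {set {x : V | x \in S}}) (tc : 'I_n),
    [/\ is_tcd (induced e S) tr X,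
        is_star tr tc,
        #|X tc| <= alpha /\ cross (induced e S) tr X tc <= k,
        (forall t, t != tc ->
           gammaS e S (X t) <= alpha ^ 2 + 2 * k /\
           delta (induced e S) (X t) (X tc) <= alpha ^ 2 + k) &
        (forall q, q != tc -> X q != [set: {x : V | x \in S}])].
Proof.
have [n [tr [X [[Htr Hdisj Hcov] Hthick Hcross]]]] := Hecrw.
have [n0 trsym trirr trconn _] := Htr.
pose node (v : V) : 'I_n := xchoose (Hcov v).
have nodeP : forall v, v \in X (node v) by move=> v; exact: xchooseP (Hcov v).
pose g (x : {x : V | x \in S}) := delta e [set val x] (~: S).
pose w (y : 'I_n) := \sum_(x : {x : V | x \in S} | node (val x) == y) g x.
have Wsum : \sum_x g x = \sum_y w y.
  by rewrite (partition_big (fun x => node (val x)) xpredT).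
have Wb : \sum_y w y <= 2 * alpha ^ 2 + 4 * k.
  by rewrite -Wsum; apply: leq_trans (sum_delta e S) Hdelta.
have [t [Ht Ht0]] : exists t, (forall x, x != t -> 2 * cw tr w t x <= \sum_y w y) /\
    (\sum_y w y = 0 -> exists x : {x : V | x \in S}, node (val x) = t).
  case: (eqVneq (\sum_y w y) 0) => [W0|W0].
    have : S != set0 by rewrite -card_gt0; lia.
    move=> /set0Pn[v hv]; exists (node v); split; last by exists (exist _ v hv).
    by move=> x _; have h := cw_le tr w (node v) x; rewrite W0 in h *; lia.
  have [t Ht] := centroid w Htr; exists t; split => // E; by rewrite E in W0.
have [s0 hs0] : exists s, s != t.
  case: (boolP [exists s, s != t]) => [/existsP//|].
  rewrite negb_exists => /forallP hall.
  have : S \subset X t.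
    apply/subsetP => v _; have := hall (node v); rewrite negbK => /eqP <-; exact: nodeP.
  move/subset_leq_card; have := Hthick t; lia.
pose Xn (a : 'I_n) : {set {x : V | x \in S}} := [set x | if a == t then node (val x) == t
    else (node (val x) != t) && (root (tree_minus tr t) (node (val x)) == a)].
have cs := sym_connect_sym (tm_sym t trsym).
have hcl : closed (tree_minus tr t) [pred z | z != t].
  by move=> a b /andP[_ /andP[ha hb]]; rewrite !inE ha hb.
have root_ne : forall y, y != t -> root (tree_minus tr t) y != t.
  move=> y hy; have := closed_connect hcl (connect_root (tree_minus tr t) y).
  by rewrite !inE hy => <-.
have gle : forall s, s != t -> gammaS e S (Xn s) <= cw tr w t s.
  move=> s hs; rewrite /gammaS /cw.
  rewrite (partition_big (fun x => node (val x)) xpredT) //=.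
  apply: leq_sum => y _; case: ifP => [_|hy].
    by apply: sum_sub => x /andP[_ ->].
  rewrite big1 // => x /andP[hx /eqP hxy]; exfalso; move: hy.
  move: hx; rewrite inE (negbTE hs) => /andP[nt /eqP rt].
  by rewrite -hxy nt /= cs -rt connect_root.
exists n, (star t), Xn, t; split.
- split; first exact: star_tree.
  + move=> a b ab; rewrite -setI_eq0; apply/eqP/setP => x; rewrite !inE.
    apply/negbTE/negP => /andP[h1 h2].
    case: (eqVneq a t) h1 => [hat|ant] h1; case: (eqVneq b t) h2 => [hbt|bnt] h2.
    * by move: ab; rewrite hat hbt eqxx.
    * by move: h2 => /andP[]; rewrite h1.
    * by move: h1 => /andP[]; rewrite h2.
    * move: h1 h2 => /andP[_ /eqP r1] /andP[_ /eqP r2].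
      by move: ab; rewrite -r1 -r2 eqxx.
  + move=> x; case: (eqVneq (node (val x)) t) => [E|ne].
      by exists t; rewrite inE eqxx E eqxx.
    by exists (root (tree_minus tr t) (node (val x))); rewrite inE (negbTE (root_ne _ ne)) ne eqxx.
- by split; [move=> a b | exists s0].
- split.
    rewrite -(card_imset _ val_inj); apply: leq_trans (subset_leq_card _) (Hthick t).
    by apply/subsetP => v /imsetP[x]; rewrite inE eqxx => /eqP hx ->; rewrite -hx; exact: nodeP.
  apply: leq_trans (Hcross t); rewrite /cross; apply: card_map_le => f.
  rewrite inE => /existsP[u /existsP[v /existsP[a /existsP[b
     /and4P[/eqP hf huv hu /and4P[hv ha hb hc]]]]]].
  move: hu hv; rewrite !inE (negbTE ha) (negbTE hb) => /andP[nu /eqP ru] /andP[nv /eqP rv].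
  have ab : a != b by apply/eqP => E; rewrite E connect0 in hc.
  rewrite hf imset_pair; apply/existsP; exists (val u); apply/existsP; exists (val v).
  apply/existsP; exists (node (val u)); apply/existsP; exists (node (val v)).
  rewrite eqxx; rewrite /induced in huv; rewrite huv !nodeP nu nv /=; apply/negP => /(rootP cs) E.
  by move: ab; rewrite -ru -rv E eqxx.
- move=> s hs; split.
    have := Ht s hs; have := gle s hs; lia.
  rewrite /delta; case: (set_0Vmem (Xn s)) => [E0|[x0 hx0]].
    have -> : [set f : {set {x : V | x \in S}} | [exists u, exists v,
       [&& f == [set u; v], induced e S u v, u \in Xn s & v \in Xn t]]] = set0.
      apply/setP => f; rewrite !inE; apply/negbTE/existsP => [[u /existsP[v /and4P[_ _ hu _]]]].
      by rewrite E0 inE in hu.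
    by rewrite cards0.
  have N0 : node (val x0) != t by move: hx0; rewrite inE (negbTE hs) => /andP[].
  have [c /andP[hct cN0c]] := neighbor trconn N0.
  have htc : tr t c by rewrite trsym.
  have tc : t != c by apply/eqP => E; move: htc; rewrite E trirr.
  have conn_u : forall u, u \in Xn s -> connect (tree_minus tr t) (node (val u)) c.
    move=> u hu; apply: connect_trans cN0c; apply/(rootP cs).
    move: hu hx0; rewrite !inE (negbTE hs) => /andP[_ /eqP ->] /andP[_ /eqP ->] //.
  pose A := [set [set p.1; p.2] | p in setX (X c) (X t)].
  pose B := [set f : {set V} | [exists u, exists v, exists s1, exists s2,
       [&& f == [set u; v], e u v, u \in X s1, v \in X s2, s1 != c, s2 != c &
           ~~ connect (tree_minus tr c) s1 s2]]].
  apply: (@leq_trans #|A :|: B|).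
    apply: card_map_le => f; rewrite inE => /existsP[u /existsP[v /and4P[/eqP -> huv hu hv]]].
    have nvt : node (val v) = t by move: hv; rewrite inE eqxx => /eqP.
    rewrite imset_pair inE; case: (eqVneq (node (val u)) c) => [Nc|Nnc].
      apply/orP; left; apply/imsetP; exists (val u, val v) => //.
      by rewrite inE /= -{1}Nc -{1}nvt !nodeP.
    apply/orP; right; rewrite inE; apply/existsP; exists (val u); apply/existsP; exists (val v).
    apply/existsP; exists (node (val u)); apply/existsP; exists t.
    rewrite eqxx; rewrite /induced in huv; rewrite huv nodeP -{1}nvt nodeP Nnc tc /=; apply/negP => h.
    by apply: (bridge Htr htc _ h); rewrite cs; apply: conn_u.
  apply: leq_trans (leq_card_setU A B).1 _.
  have hA : #|A| <= alpha ^ 2.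
    apply: leq_trans (leq_imset_card _ _) _; rewrite cardsX -mulnn.
    exact: leq_mul (Hthick c) (Hthick t).
  have hB : #|B| <= k by exact: Hcross c.
  lia.
- move=> q hq; apply/negP => /eqP EQ.
  have g2 := leq_trans (leq_mul (leqnn 2) (gle q hq)) (Ht q hq).
  have : gammaS e S (Xn q) = \sum_x g x by rewrite EQ /gammaS; apply: eq_bigl => x; rewrite inE.
  move=> h; rewrite h Wsum in g2.
  have [x0 hx0] := Ht0 ltac:(lia).
  have : x0 \in Xn q by rewrite EQ inE.
  by rewrite inE (negbTE hq) hx0 eqxx.
Qed.
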